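(* Let $\mathcal{H}$ be a complex separable Hilbert space and let $A$ be a bounded selfadjoint operator on $\mathcal{H}$. Then $A$ is an effect (i.e. $\mathbb{O}\le A\le I$) if and only if $$0\le \|A\|+\|I-A\|-1\le 1-\bigl|\,\|A\|-\|I-A\|\,\bigr|.$$
   Context: $\|\cdot\|$ denotes the operator norm, $I$ the identity and $\mathbb{O}$ the zero operator on $\mathcal{H}$; $A\le B$ means $\langle\varphi,A\varphi\rangle\le\langle\varphi,B\varphi\rangle$ for all $\varphi\in\mathcal{H}$. *)

(* Defs.v *)
(* scalars are the complex numbers R[i] over an abstract
   R : realType (mathcomp-real-closed's complex, ordered as a numClosedField). *)
From HB Require Import structures.
From mathcomp Require Import all_boot all_order all_algebra.
From mathcomp Require Import complex.
From mathcomp Require Import boolp classical_sets reals.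
Set Implicit Arguments. Unset Strict Implicit. Unset Printing Implicit Defensive.
Import Order.TTheory GRing.Theory Num.Theory.
Local Open Scope ring_scope.
Local Open Scope classical_set_scope.

Section Hilbert.
Variables (R : realType) (V : lmodType R[i]) (ip : V -> V -> R[i]).

Definition hnorm (x : V) : R := Num.sqrt (complex.Re (ip x x)).

(* inner product: conjugate-linear in the first, linear in the second argument *)
Definition is_inner_product : Prop :=
  [/\ (forall x (a : R[i]) y z, ip x (a *: y + z) = a * ip x y + ip x z),
      (forall x y, ip y x = (ip x y)^*),
      (forall x, 0 <= ip x x) &
      (forall x, ip x x = 0 -> x = 0)].

Definition hcauchy (u : nat -> V) : Prop :=
  forall e : R, 0 < e -> exists N, forall m n, (N <= m)%N -> (N <= n)%N ->
    hnorm (u m - u n) < e.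

Definition hconverges (u : nat -> V) (l : V) : Prop :=
  forall e : R, 0 < e -> exists N, forall n, (N <= n)%N -> hnorm (u n - l) < e.

Definition is_separable_hilbert : Prop :=
  [/\ is_inner_product,
      (forall u, hcauchy u -> exists l, hconverges u l) &
      (exists d : nat -> V, forall x (e : R), 0 < e -> exists n, hnorm (x - d n) < e)].

Definition bounded_op (A : V -> V) : Prop :=
  exists M : R, forall x, hnorm (A x) <= M * hnorm x.

Definition selfadjoint (A : V -> V) : Prop :=
  forall x y, ip (A x) y = ip x (A y).

Definition opnorm (A : V -> V) : R :=
  sup [set hnorm (A x) | x in [set x | hnorm x <= 1]].

Definition effect (A : V -> V) : Prop :=
  forall phi, 0 <= ip phi (A phi) /\ ip phi (A phi) <= ip phi phi.

End Hilbert.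

(* Main.v *)
Require Import Defs.
From HB Require Import structures.
From mathcomp Require Import all_boot all_order all_algebra.
From mathcomp Require Import complex.
From mathcomp Require Import boolp classical_sets reals.
From mathcomp Require Import ring lra.
Import Order.TTheory GRing.Theory Num.Theory.
Set Implicit Arguments. Unset Strict Implicit.
Local Open Scope complex_scope.
Local Open Scope ring_scope.

Lemma cReD (R : realType) (u v : R[i]) : complex.Re (u + v) = complex.Re u + complex.Re v.
Proof. by case: u; case: v. Qed.
Lemma cReN (R : realType) (u : R[i]) : complex.Re (- u) = - complex.Re u.
Proof. by case: u. Qed.
Lemma cReB (R : realType) (u v : R[i]) : complex.Re (u - v) = complex.Re u - complex.Re v.
Proof. by rewrite cReD cReN. Qed.
Lemma cReMr (R : realType) (t : R) (u : R[i]) : complex.Re (t%:C * u) = t * complex.Re u.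
Proof. case: u => a b /=. by rewrite mul0r subr0. Qed.
Lemma rcreal (R : realType) (t : R) : t%:C \is Num.real.
Proof. by rewrite complex_real. Qed.
Lemma numconj (R : realType) (x : R[i]) : x^* = conjc x.
Proof.
rewrite {1}[x]complexE complexiE conjC_rect ?rcreal // -complexiE.
case: x => a b /=. apply/eqP; rewrite eq_complex /=.
by rewrite !mul0r !mul1r ?mulr0 ?subrr ?subr0 ?addr0 ?sub0r ?add0r !eqxx.
Qed.
Lemma cReJ (R : realType) (u : R[i]) : complex.Re (u^*) = complex.Re u.
Proof. by rewrite numconj; case: u. Qed.
Lemma cImJ (R : realType) (u : R[i]) : complex.Im (u^*) = - complex.Im u.
Proof. by rewrite numconj; case: u. Qed.
Lemma cJr (R : realType) (t : R) : (t%:C)^* = t%:C :> R[i].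
Proof. by rewrite conj_Creal ?rcreal. Qed.

Section S.
Variables (R : realType) (V : lmodType R[i]) (ip : V -> V -> R[i]).
Hypothesis hip : is_inner_product ip.

Lemma ip_lin x a y z : ip x (a *: y + z) = a * ip x y + ip x z.
Proof. by case: hip. Qed.
Lemma ip_herm x y : ip y x = (ip x y)^*.
Proof. by case: hip. Qed.
Lemma ip_pos x : 0 <= ip x x.
Proof. by case: hip. Qed.
Lemma ip0r x : ip x 0 = 0.
Proof.
have := ip_lin x 1 0 0. rewrite scale1r addr0 mul1r => h.
by apply: (addIr (ip x 0)); rewrite -h add0r.
Qed.
Lemma ipZr x a y : ip x (a *: y) = a * ip x y.
Proof. by have := ip_lin x a y 0; rewrite addr0 ip0r addr0. Qed.
Lemma ipDr x y z : ip x (y + z) = ip x y + ip x z.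
Proof. by have := ip_lin x 1 y z; rewrite scale1r mul1r. Qed.
Lemma ipNr x y : ip x (- y) = - ip x y.
Proof. by rewrite -scaleN1r ipZr mulN1r. Qed.
Lemma ipBr x y z : ip x (y - z) = ip x y - ip x z.
Proof. by rewrite ipDr ipNr. Qed.
Lemma ipDl x y z : ip (y + z) x = ip y x + ip z x.
Proof. by rewrite !(ip_herm x) ipDr rmorphD. Qed.
Lemma ipNl x y : ip (- y) x = - ip y x.
Proof. by rewrite !(ip_herm x) ipNr rmorphN. Qed.
Lemma ipBl x y z : ip (y - z) x = ip y x - ip z x.
Proof. by rewrite ipDl ipNl. Qed.
Lemma ipZl x a y : ip (a *: y) x = a^* * ip y x.
Proof. by rewrite !(ip_herm x) ipZr rmorphM. Qed.

Lemma ip_Re_ge0 x : 0 <= complex.Re (ip x x).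
Proof. by have := ip_pos x; rewrite lecE => /andP[]. Qed.
Lemma ip_Im0 x : complex.Im (ip x x) = 0.
Proof. exact: ger0_Im (ip_pos x). Qed.

Lemma hnorm_ge0 x : 0 <= hnorm ip x.
Proof. exact: sqrtr_ge0. Qed.
Lemma hnorm_sq x : hnorm ip x ^+ 2 = complex.Re (ip x x).
Proof. by rewrite /hnorm sqr_sqrtr // ip_Re_ge0. Qed.
Lemma hnorm0 : hnorm ip 0 = 0.
Proof. by rewrite /hnorm ip0r /= sqrtr0. Qed.

Lemma ReipC x y : complex.Re (ip y x) = complex.Re (ip x y).
Proof. by rewrite ip_herm cReJ. Qed.

Lemma quad_CS (P Q c : R) : (forall t : R, 0 <= P - 2 * t * c + t ^+ 2 * Q) ->
  0 <= Q -> c ^+ 2 <= P * Q.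
Proof.
move=> H hQ. have hP : 0 <= P by have := H 0; rewrite /= !(mulr0, mul0r, expr0n, subr0, addr0).
have [Q0|Qpos] := eqVneq Q 0.
  subst Q. rewrite mulr0.
  have [c0|cn0] := eqVneq c 0; first by rewrite c0 expr0n.
  have := H ((P + 1) / (2 * c)). rewrite mulr0 addr0.
  have -> : 2 * ((P + 1) / (2 * c)) * c = P + 1 by field; rewrite cn0.
  lra.
have Qp : 0 < Q by rewrite lt_def Qpos hQ.
have := H (c / Q).
have -> : P - 2 * (c / Q) * c + (c / Q) ^+ 2 * Q = P - c ^+ 2 / Q by field; rewrite Qpos.
rewrite subr_ge0 ler_pdivrMr //.
Qed.

Lemma gen_CS (f : V -> V -> R[i])
  (flin : forall x a y z, f x (a *: y + z) = a * f x y + f x z)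
  (fherm : forall x y, f y x = (f x y)^*)
  (fpos : forall x, 0 <= complex.Re (f x x)) x y :
  complex.Re (f x y) ^+ 2 <= complex.Re (f x x) * complex.Re (f y y).
Proof.
apply: quad_CS; last exact: fpos.
move=> t. set w := (- t)%:C *: y + x.
have e1 : complex.Re (f w y) = - t * complex.Re (f y y) + complex.Re (f x y).
  by rewrite fherm flin cReJ cReD cReMr (fherm x y) cReJ.
have e2 : complex.Re (f w x) = - t * complex.Re (f x y) + complex.Re (f x x).
  by rewrite fherm flin cReJ cReD cReMr.
have := fpos w. rewrite {2}/w flin cReD cReMr e1 e2.
move=> h. nra.
Qed.

Lemma ip_CS x y : complex.Re (ip x y) <= hnorm ip x * hnorm ip y.
Proof.
have := gen_CS ip_lin ip_herm ip_Re_ge0 x y.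
rewrite -!hnorm_sq -exprMn => h.
have := mulr_ge0 (hnorm_ge0 x) (hnorm_ge0 y).
move: h; set d := _ * _; set c := complex.Re _. nra.
Qed.

Lemma hnorm_triangle x y : hnorm ip (x + y) <= hnorm ip x + hnorm ip y.
Proof.
have h : hnorm ip (x + y) ^+ 2 <= (hnorm ip x + hnorm ip y) ^+ 2.
  rewrite hnorm_sq ipDl !ipDr !cReD (ReipC x y) -!hnorm_sq.
  have := ip_CS x y. nra.
have := addr_ge0 (hnorm_ge0 x) (hnorm_ge0 y). have := hnorm_ge0 (x + y).
move: h. set u := hnorm ip (x + y); set v := _ + _. nra.
Qed.

Lemma hnormZ (t : R) x : hnorm ip (t%:C *: x) = `|t| * hnorm ip x.
Proof.
rewrite /hnorm ipZl ipZr cJr !cReMr mulrA -expr2.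
by rewrite sqrtrM ?sqr_ge0 // sqrtr_sqr.
Qed.

Lemma hnormN x : hnorm ip (- x) = hnorm ip x.
Proof.
have -> : - x = (-1)%:C *: x by rewrite rmorphN1 scaleN1r.
by rewrite hnormZ normrN normr1 mul1r.
Qed.

Lemma hnorm_eq0 x : hnorm ip x = 0 -> x = 0.
Proof.
move=> h. case: hip => _ _ _ /(_ x); apply.
have h2 : complex.Re (ip x x) = 0 by rewrite -hnorm_sq h expr0n.
have h3 := ip_Im0 x.
by move: h2 h3; case: (ip x x) => a b /= -> ->.
Qed.

Local Open Scope classical_set_scope.
Definition opset (B : V -> V) := [set hnorm ip (B x) | x in [set x | hnorm ip x <= 1]].

Lemma opnorm_ub (B : V -> V) x : has_ubound (opset B) -> hnorm ip x <= 1 ->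
  hnorm ip (B x) <= opnorm ip B.
Proof. move=> hb hx. apply: (ub_le_sup hb). by exists x. Qed.

Lemma opnorm_le (B : V -> V) k : (forall x, hnorm ip x <= 1 -> hnorm ip (B x) <= k) ->
  opnorm ip B <= k.
Proof.
move=> h. apply: ge_sup.
  exists (hnorm ip (B 0)), 0 => //=. by rewrite hnorm0.
by move=> _ [x hx <-]; apply: h.
Qed.

Lemma opnorm_bound (B : V -> V) (hB : forall t x, B (t%:C *: x) = t%:C *: B x)
  (hb : has_ubound (opset B)) x : hnorm ip (B x) <= opnorm ip B * hnorm ip x.
Proof.
have [h0|hn0] := eqVneq (hnorm ip x) 0.
  have -> : x = 0 by apply: hnorm_eq0.
  have -> : B 0 = 0 by have := hB 0 0; rewrite rmorph0 !scale0r.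
  by rewrite hnorm0 mulr0.
have hp : 0 < hnorm ip x by rewrite lt_def hn0 hnorm_ge0.
have := @opnorm_ub B ((hnorm ip x)^-1%:C *: x) hb.
rewrite hB !hnormZ ger0_norm ?invr_ge0 ?hnorm_ge0 // mulVf // lexx => /(_ isT).
by rewrite mulrC -ler_pdivlMr ?invr_gt0 // invrK.
Qed.

Lemma eff_contr (B : V -> V)
  (hBl : forall a y z, B (a *: y + z) = a *: B y + B z)
  (hBs : forall x y, ip (B x) y = ip x (B y))
  (hpos : forall x, 0 <= complex.Re (ip x (B x)))
  (hle : forall x, complex.Re (ip x (B x)) <= complex.Re (ip x x)) x :
  hnorm ip (B x) <= hnorm ip x.
Proof.
pose f u v := ip u (B v).
have flin : forall u a y z, f u (a *: y + z) = a * f u y + f u z.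
  by move=> u a y z; rewrite /f hBl ip_lin.
have fherm : forall u v, f v u = (f u v)^*.
  by move=> u v; rewrite /f -hBs ip_herm.
have := gen_CS flin fherm hpos x (B x).
rewrite /f -hBs -hnorm_sq => h.
have h1 := hle x. have h2 := hle (B x). have h3 := hpos x. have h4 := hpos (B x).
rewrite -!hnorm_sq in h1 h2.
have := hnorm_ge0 x; have := hnorm_ge0 (B x).
set m := hnorm ip (B x); set n := hnorm ip x.
set p := complex.Re (ip x (B x)) in h h1 h3; set q := complex.Re (ip (B x) (B (B x))) in h h2 h4.
move=> hm hn.
have hm2 : (m ^+ 2) ^+ 2 <= n ^+ 2 * m ^+ 2.
  apply: (le_trans h). apply: ler_pM => //.
have hm3 : m ^+ 2 <= n ^+ 2 by nra.
nra.
Qed.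
End S.

Theorem mainTheorem1 (R : realType) (V : lmodType R[i]) (ip : V -> V -> R[i])
  (hH : is_separable_hilbert ip) (hV : exists x : V, x != 0) (A : {linear V -> V})
  (hAb : bounded_op ip A) (hAs : selfadjoint ip A) :
  effect ip A <->
  (0 <= opnorm ip A + opnorm ip (fun x => x - A x) - 1 /\
   opnorm ip A + opnorm ip (fun x => x - A x) - 1
     <= 1 - `| opnorm ip A - opnorm ip (fun x => x - A x) |).
Proof.
have hip : is_inner_product ip by case: hH.
pose B := fun x => x - A x.
have Alin : forall c y z, A (c *: y + z) = c *: A y + A z by move=> c y z; rewrite linearP.
have Blin : forall c y z, B (c *: y + z) = c *: B y + B z.
  by move=> c y z; rewrite /B linearP scalerBr opprD addrACA.
have Bs : forall x y, ip (B x) y = ip x (B y).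
  by move=> x y; rewrite /B ipBl // ipBr // hAs.
have AZ : forall t x, A (t%:C *: x) = t%:C *: A x by move=> t x; rewrite linearZ.
have BZ : forall t x, B (t%:C *: x) = t%:C *: B x by move=> t x; rewrite /B linearZ scalerBr.
case: hAb => M hM.
have ubA : has_ubound (opset ip A).
  exists `|M| => _ [x hx <-]. have := hM x. have := hnorm_ge0 ip x.
  have := ler_norm M; have := normr_ge0 M. rewrite /= in hx. nra.
have ubB : has_ubound (opset ip B).
  exists (1 + `|M|) => _ [x hx <-]. rewrite /= in hx.
  have := hnorm_triangle hip x (- A x). rewrite hnormN //.
  have := hM x. have := hnorm_ge0 ip x.
  have := ler_norm M; have := normr_ge0 M. rewrite /B. nra.
rewrite -/B.
set a := opnorm ip A; set b := opnorm ip B.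
split.
- move=> hE.
  have hEA1 : forall x, 0 <= complex.Re (ip x (A x)).
    by move=> x; case: (hE x) => + _; rewrite lecE => /andP[].
  have hEA2 : forall x, complex.Re (ip x (A x)) <= complex.Re (ip x x).
    by move=> x; case: (hE x) => _; rewrite lecE => /andP[].
  have ha : a <= 1.
    apply: opnorm_le => // x hx; apply: le_trans hx.
    exact: (eff_contr hip Alin hAs hEA1 hEA2).
  have hb : b <= 1.
    apply: opnorm_le => // x hx; apply: le_trans hx.
    apply: (eff_contr hip Blin Bs) => y; rewrite /B ipBr // cReB.
      by rewrite subr_ge0.
    by rewrite lerBlDr lerDl.
  have hab : 1 <= a + b.
    case: hV => x xn0.
    have hn : 0 < hnorm ip x.
      rewrite lt_def hnorm_ge0 // andbT; apply/eqP => /(hnorm_eq0 hip) h.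
      by rewrite h eqxx in xn0.
    pose x0 := (hnorm ip x)^-1%:C *: x.
    have hx0 : hnorm ip x0 = 1.
      by rewrite hnormZ // ger0_norm ?invr_ge0 ?hnorm_ge0 // mulVf // gt_eqF.
    have := hnorm_triangle hip (A x0) (B x0).
    rewrite /B addrC subrK hx0.
    have hx01 : hnorm ip x0 <= 1 by rewrite hx0.
    have := opnorm_ub ubA hx01. have := opnorm_ub ubB hx01.
    rewrite -/a -/b. lra.
  have hn : `|a - b| <= 2 - a - b by rewrite ler_norml; apply/andP; split; lra.
  split; lra.
- case => h1 h2.
  have h3 := ler_norm (a - b). have h4 : b - a <= `|a - b| by rewrite distrC ler_norm.
  have ha : a <= 1 by lra.
  have hb : b <= 1 by lra.
  move=> phi.
  have hz : complex.Im (ip phi (A phi)) = 0.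
    have e : ip phi (A phi) = (ip phi (A phi))^* by rewrite -ip_herm // hAs.
    have := cImJ (ip phi (A phi)); rewrite -e. lra.
  have n0 := hnorm_ge0 ip phi.
  have k1 := ip_CS hip phi (A phi).
  have k2 := opnorm_bound hip AZ ubA phi.
  have k3 := ip_CS hip phi (B phi).
  have k4 := opnorm_bound hip BZ ubB phi.
  have eB : ip phi (B phi) = ip phi phi - ip phi (A phi) by rewrite /B ipBr.
  rewrite eB cReB -hnorm_sq // in k3.
  rewrite -/a in k2. rewrite -/b in k4.
  rewrite !lecE hz ip_Im0 // eqxx /= -hnorm_sq //.
  have n2 := mulr_ge0 n0 n0.
  move: k1 k2 k3 k4 n2 n0.
  set r := complex.Re _; set n := hnorm ip phi; set hA := hnorm ip (A phi); set hB := hnorm ip (B phi).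
  move=> k1 k2 k3 k4 n2 n0.
  have q1 : n * hA <= n ^+ 2 by have := ler_wpM2l n0 k2; nra.
  have q2 : n * hB <= n ^+ 2 by have := ler_wpM2l n0 k4; nra.
  split; nra.
Qed.
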